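(* Let $X=(x_{ij})_{2\le i,j\le n}$ be indeterminates and $I\subset\mathbb R[X]$ the ideal generated by all $x_{ij}-x_{ji}$ and all $x_{ij}x_{kl}+x_{ik}x_{jl}+x_{il}x_{jk}$ ($2\le i,j,k,l\le n$). Then modulo $I$: (i) $x_{aa}x_{ab}=0$ and $x_{ab_1}x_{ab_2}x_{ab_3}=0$ for all $a,b,b_1,b_2,b_3\in\{2,\dots,n\}$; (ii) $\det(x_{ij})_{2\le i,j\le n}=\frac{n!}{2^{n-1}}\,x_{22}x_{33}\cdots x_{nn}$; (iii) for all $i,j\ge0$, $E_i(x_{22},\dots,x_{nn})\,E_j(x_{22},\dots,x_{nn})=\binom{i+j}{i}E_{i+j}(x_{22},\dots,x_{nn})$, where $E_i$ denotes the $i$-th elementary symmetric polynomial. *)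

(* Defs.v *)
From HB Require Import structures.
From mathcomp Require Import all_boot all_order all_algebra.
Set Implicit Arguments. Unset Strict Implicit. Unset Printing Implicit Defensive.
Import Order.TTheory GRing.Theory Num.Theory.
Local Open Scope ring_scope.

Definition elem_sym (R : comPzRingType) (s : seq R) (k : nat) : R :=
  \sum_(S : {set 'I_(size s)} | #|S| == k) \prod_(i in S) s`_i.

Definition sym_rels (R : pzRingType) (n : nat) (x : nat -> nat -> R) : Prop :=
  (forall i j, 2 <= i <= n -> 2 <= j <= n -> x i j = x j i)%N /\
  (forall i j k l, (2 <= i <= n)%N -> (2 <= j <= n)%N ->
     (2 <= k <= n)%N -> (2 <= l <= n)%N ->
     x i j * x k l + x i k * x j l + x i l * x j k = 0).

Definition diagseq (R : Type) (n : nat) (x : nat -> nat -> R) : seq R :=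
  [seq x i i | i <- iota 2 n.-1].

(* Main.v *)
Require Import Defs.
From HB Require Import structures.
From mathcomp Require Import all_boot all_order all_algebra.
From mathcomp Require Import ring zify.
Set Implicit Arguments. Unset Strict Implicit. Unset Printing Implicit Defensive.
Import Order.TTheory GRing.Theory Num.Theory.
Local Open Scope ring_scope.

Section Esym.
Variable R : comPzRingType.
Variable s : seq R.
Hypothesis hs : forall a : 'I_(size s), s`_a * s`_a = 0.

Lemma prod_mul (S T : {set 'I_(size s)}) :
  \prod_(a in S) s`_a * \prod_(a in T) s`_a =
  if [disjoint S & T] then \prod_(a in S :|: T) s`_a else 0.
Proof.
case: ifP => dST.
  by rewrite -bigU //; apply: eq_bigl => a; rewrite !inE.
case: (set_0Vmem (S :&: T)) => [h|[a]].
  by move: dST; rewrite -setI_eq0 h eqxx.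
rewrite inE => /andP [aS aT].
by rewrite (big_setD1 a aS) (big_setD1 a aT) /= mulrACA hs mul0r.
Qed.

Lemma esym_mul i j :
  elem_sym s i * elem_sym s j = 'C(i + j, i)%:R * elem_sym s (i + j).
Proof.
rewrite /elem_sym mulr_suml.
transitivity (\sum_(S : {set 'I_(size s)} | #|S| == i)
   \sum_(U : {set 'I_(size s)} | (S \subset U) && (#|U| == i + j))
     \prod_(a in U) s`_a).
  apply: eq_bigr => S /eqP hS; rewrite mulr_sumr.
  rewrite (bigID (fun T : {set 'I_(size s)} => [disjoint S & T])) /= [X in _ + X]big1 ?addr0;
    last by move=> T /andP[_ /negbTE h]; rewrite prod_mul h.
  rewrite [RHS](reindex_onto (fun T => S :|: T) (fun U => U :\: S)) /=; last first.
    move=> U /andP[sSU _]; apply/setP => a; rewrite !inE.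
    by case: (boolP (a \in S)) => //= aS; rewrite (subsetP sSU).
  apply: eq_big => T.
    rewrite subsetUl /= setDUl setDv set0U.
    case dTS: [disjoint S & T].
      have -> : T :\: S = T by apply/finset.setDidPl; rewrite disjoint_sym.
      rewrite eqxx andbT andbT cardsU (disjoint_setI0 dTS) cards0 subn0 hS.
      by rewrite eqn_add2l.
    rewrite andbF; apply/esym/negbTE/negP => /andP[_ /eqP h].
    by move: dTS; rewrite disjoint_sym (introT (@finset.setDidPl _ T S) h).
  by move=> /andP[_ dST]; rewrite prod_mul dST.
rewrite (exchange_big_dep (fun U : {set 'I_(size s)} => #|U| == i + j)) /=;
  last by move=> S U _ /andP[].
rewrite mulr_sumr; apply: eq_bigr => U /eqP hU.
rewrite (eq_bigl (fun S => S \in [set S : {set 'I_(size s)} | S \subset U & #|S| == i]))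
  => [|S]; last by rewrite !inE hU eqxx andbT andbC.
rewrite sumr_const cards_draws hU.
by rewrite mulr_natl.
Qed.
End Esym.
Section Bord.
Variable R : comNzRingType.

Lemma sign_aux (k i j : nat) :
  (-1) ^+ (k.+1 + j) * (-1) ^+ (i + k) = - (-1) ^+ (i + j) :> R.
Proof.
have -> : - (-1) ^+ (i + j) = (-1) ^+ (i + j).+1 :> R by rewrite exprS mulN1r.
rewrite -exprD -[LHS]signr_odd -[RHS]signr_odd.
congr (_ ^+ _); rewrite /= !oddD /=.
by case: (odd i); case: (odd j); case: (odd k).
Qed.

Lemma bump_lt m y : (y < m)%N -> bump m y = y.
Proof. by move=> h; rewrite /bump leqNgt h. Qed.

Lemma bordered k (M : 'M[R]_k.+1) :
  let M' := \matrix_(i < k, j < k) M (widen_ord (leqnSn k) i) (widen_ord (leqnSn k) j) in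
  \det M = M ord_max ord_max * \det M' -
    \sum_(i < k) \sum_(j < k) M (widen_ord (leqnSn k) i) ord_max *
        M ord_max (widen_ord (leqnSn k) j) * cofactor M' i j.
Proof.
move=> M'.
rewrite (expand_det_row _ ord_max) big_ord_recr /= addrC; congr (_ + _).
  rewrite /cofactor addnn -signr_odd odd_double expr0 mul1r; congr (_ * \det _).
  apply/matrixP => i j; rewrite !mxE; congr (M _ _); apply: val_inj => /=;
  by rewrite /bump leqNgt ltn_ord.
rewrite exchange_big -sumrN; apply: eq_bigr => j _.
rewrite {}/M'; case: k M j => [|k] M j; first by case: j.
rewrite (eq_bigr (fun i => M ord_max (widen_ord (leqnSn k.+1) j) *
   (M (widen_ord (leqnSn k.+1) i) ord_max * cofactor (\matrix_(i, j) M (widen_ord (leqnSn k.+1) i) (widen_ord (leqnSn k.+1) j)) i j))) => [|i _]; last first.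
  by rewrite [RHS]mulrCA mulrA.
rewrite -mulr_sumr -mulrN -sumrN; congr (_ * _).
rewrite /cofactor (expand_det_col _ ord_max) mulr_sumr; apply: eq_bigr => i _.
rewrite /cofactor !mxE.
have -> : M (lift ord_max i) (lift (widen_ord (leqnSn k.+1) j) ord_max) =
   M (widen_ord (leqnSn k.+1) i) ord_max.
  congr (M _ _); apply: val_inj => /=.
    by rewrite (bump_lt (ltn_ord i)).
  by rewrite /bump (leq_ord j).
have -> : row' i (col' ord_max (row' ord_max (col' (widen_ord (leqnSn k.+1) j) M)))
  = row' i (col' j (\matrix_(i0, j0) M (widen_ord (leqnSn k.+1) i0) (widen_ord (leqnSn k.+1) j0))).
  apply/matrixP => a b; rewrite !mxE; congr (M _ _); apply: val_inj => /=.
    by rewrite (bump_lt (ltn_ord (lift i a))).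
  by rewrite (bump_lt (ltn_ord b)).
set D := \det _; set m := M _ ord_max.
have h := sign_aux k i j.
transitivity (((-1) ^+ (k.+1 + j) * (-1) ^+ (i + k)) * (m * D)); first by ring.
by rewrite h; ring.
Qed.
End Bord.

Section Main.
Variables (F : realFieldType) (A : comAlgType F) (n : nat) (x : nat -> nat -> A).
Hypothesis hx : sym_rels n x.

Lemma half (v w : A) : v *+ 2 = w -> v = (2^-1 : F) *: w.
Proof.
move=> <-; rewrite -scaler_nat scalerA mulVf ?scale1r //.
by rewrite pnatr_eq0.
Qed.

Lemma third (v : A) : v *+ 3 = 0 -> v = 0.
Proof.
move=> h; rewrite -[v]scale1r -(@mulVf F 3%:R) ?pnatr_eq0 //.
by rewrite -scalerA scaler_nat h scaler0.
Qed.

Lemma xx_ab a b c : (2 <= a <= n)%N -> (2 <= b <= n)%N -> (2 <= c <= n)%N ->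
  x a b * x a c = - ((2^-1 : F) *: (x a a * x b c)).
Proof.
move=> ha hb hc; have h := hx.2 a a b c ha ha hb hc.
rewrite -scalerN; apply: half; rewrite mulr2n.
move: h; rewrite [x a c * x a b]mulrC -addrA addrC => /eqP.
by rewrite addr_eq0 => /eqP.
Qed.

Lemma part1a a b : (2 <= a <= n)%N -> (2 <= b <= n)%N -> x a a * x a b = 0.
Proof.
move=> ha hb; have h := hx.2 a a a b ha ha ha hb.
rewrite [x a b * x a a]mulrC in h.
by apply: third; rewrite !mulrS mulr0n addr0 addrA.
Qed.

Lemma part1b a b1 b2 b3 : (2 <= a <= n)%N -> (2 <= b1 <= n)%N ->
     (2 <= b2 <= n)%N -> (2 <= b3 <= n)%N -> x a b1 * x a b2 * x a b3 = 0.
Proof.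
move=> ha h1 h2 h3.
rewrite xx_ab // mulNr -scalerAl -mulrA [x b1 b2 * x a b3]mulrC mulrA.
by rewrite part1a // mul0r scaler0 oppr0.
Qed.

Definition D k := \det (\matrix_(i < k, j < k) x (i + 2)%N (j + 2)%N).

Lemma Dstep k : (k.+2 <= n)%N ->
  D k.+1 = x (k + 2)%N (k + 2)%N * D k
     + ((2^-1 : F) *: (x (k + 2)%N (k + 2)%N * D k)) *+ k.
Proof.
move=> hk.
rewrite /D bordered.
have eM : \matrix_(i < k, j < k) (\matrix_(i < k.+1, j < k.+1) x (i + 2)%N (j + 2)%N)
   (widen_ord (leqnSn k) i) (widen_ord (leqnSn k) j) = \matrix_(i < k, j < k) x (i + 2)%N (j + 2)%N.
  by apply/matrixP => i j; rewrite !mxE.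
rewrite eM !mxE; congr (_ + _).
have hs : forall i j : 'I_k, x (i + 2)%N (k + 2)%N * x (k + 2)%N (j + 2)%N =
    - ((2^-1 : F) *: (x (k + 2)%N (k + 2)%N * x (i + 2)%N (j + 2)%N)).
  move=> i j; have := ltn_ord i; have := ltn_ord j => hi hj.
  rewrite hx.1; try lia.
  rewrite xx_ab //; lia.
transitivity (- \sum_(i < k) - ((2^-1 : F) *: (x (k + 2)%N (k + 2)%N * D k))).
  congr (- _); apply: eq_bigr => i _.
  rewrite /D (expand_det_row _ i) mulr_sumr scaler_sumr -sumrN.
  apply: eq_bigr => j _; rewrite !mxE hs mulNr -scalerAl -mulrA.
  by [].
by rewrite sumrN opprK sumr_const card_ord.
Qed.

Lemma Dform k : (k < n)%N -> D k =
  (((k.+1)`!)%:R / (2 ^ k)%:R : F) *: \prod_(i < k) x (i + 2)%N (i + 2)%N.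
Proof.
elim: k => [|k IH] hk.
  by rewrite /D det_mx00 big_ord0 expn0 divr1 scale1r.
rewrite Dstep // IH 1?ltnW // big_ord_recr /=.
rewrite -scalerAr scalerA -scaler_nat scalerA -scalerDl [_ * x _ _]mulrC.
congr (_ *: _).
rewrite [(k.+2)`!]factS expnS !natrM.
have -> : ((k.+2)%:R : F) = k%:R + 2 by rewrite -addn2 natrD.
have h2 : (2%:R : F) != 0 by rewrite pnatr_eq0.
have hk2 : ((2 ^ k)%:R : F) != 0 by rewrite pnatr_eq0 expn_eq0.
by field; rewrite pnatr_eq0 expn_eq0.
Qed.

End Main.

Unset Implicit Arguments.

Theorem mainTheorem14 (F : realFieldType) (A : comAlgType F) (n : nat)
    (hn : (2 <= n)%N) (x : nat -> nat -> A) (hx : sym_rels n x) :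
  (* (i) *)
  (forall a b, (2 <= a <= n)%N -> (2 <= b <= n)%N -> x a a * x a b = 0) /\
  (forall a b1 b2 b3, (2 <= a <= n)%N -> (2 <= b1 <= n)%N ->
     (2 <= b2 <= n)%N -> (2 <= b3 <= n)%N -> x a b1 * x a b2 * x a b3 = 0) /\
  (* (ii) *)
  \det (\matrix_(i < n.-1, j < n.-1) x (i + 2)%N (j + 2)%N)
    = ((n`!)%:R / (2 ^ n.-1)%:R : F) *: \prod_(2 <= i < n.+1) x i i /\
  (* (iii) *)
  (forall i j : nat,
     elem_sym (diagseq n x) i * elem_sym (diagseq n x) j
       = 'C(i + j, i)%:R * elem_sym (diagseq n x) (i + j)).
Proof.
have p1a := part1a hx; have p1b := part1b hx.
split; first exact: p1a.
split; first exact: p1b.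
split.
  have hlt : (n.-1 < n)%N by lia.
  have hD := Dform hx hlt; rewrite /D in hD; rewrite hD.
  rewrite prednK; last by lia.
  congr (_ *: _).
  rewrite (big_addn 0 n.+1 2) big_mkord subSS subn1.
  by [].
move=> i j; apply: esym_mul => a.
have ha : (a < n.-1)%N.
  by rewrite -(size_iota 2 n.-1) -(size_map (fun i => x i i)); exact: ltn_ord a.
rewrite /diagseq (nth_map 0%N) ?size_iota // nth_iota //.
apply: p1a.
all: move: (nat_of_ord a) ha => k; rewrite -subn1; lia.
Qed.
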